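(* A strong regular facets-pairing structure $\mathcal{F}$ on $\mathcal{C}^n$ is perfect if and only if all $2^n$ vertices of $\mathcal{C}^n$ belong to a single face family of $\mathcal{F}$.
   Context: Let $[\pm n]=\{\pm1,\dots,\pm n\}$ and $\mathcal{C}^n=\{x\in\mathbb{R}^n: -\tfrac14\le x_i\le\tfrac14\}$. For $1\le i\le n$, $\mathbf{F}(i)$ and $\mathbf{F}(-i)$ denote the facets of $\mathcal{C}^n$ in $\{x_i=\tfrac14\}$ and $\{x_i=-\tfrac14\}$; for $j_1,\dots,j_s\in[\pm n]$ with distinct absolute values, $\mathbf{F}(j_1,\dots,j_s)=\bigcap_i\mathbf{F}(j_i)$ (every proper face has this form). A signed permutation is a bijection $\sigma$ of $[\pm n]$ with $\sigma(-k)=-\sigma(k)$. A facets-pairing structure on $\mathcal{C}^n$ is a pair $(\omega,\{\tau_j\})$ where $\omega$ is a bijection of $[\pm n]$ with $\omega\circ\omega=\mathrm{id}$ and $\tau_j:\mathbf{F}(j)\to\mathbf{F}(\omega(j))$ are face-preserving homeomorphisms with $\tau_{\omega(j)}=\tau_j^{-1}$, such that for all $|j|\ne|k|$, writing $\tau_j(\mathbf{F}(j,k))=\mathbf{F}(\omega(j),k')$ and $\tau_k(\mathbf{F}(j,k))=\mathbf{F}(j',\omega(k))$, one has $\tau_{k'}\tau_j(p)=\tau_{j'}\tau_k(p)$ for all $p\in\mathbf{F}(j,k)$. It is regular if each $\tau_j$ is a Euclidean isometry and $\omega$ is a signed permutation. A composition $\tau_{k_m}\circ\dots\circ\tau_{k_1}$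 applied to a proper face $f$ is valid if $f\subset\mathbf{F}(k_1)$ and $\tau_{k_i}\circ\dots\circ\tau_{k_1}(f)\subset\mathbf{F}(k_{i+1})$ for $1\le i<m$ ($m=0$ allowed). The face family $\widehat f$ is the set of faces $\tau_{k_m}\circ\dots\circ\tau_{k_1}(f)$ over all valid compositions. $\mathcal{F}$ is perfect if for every proper face $f$ of codimension $s$, $\widehat f$ has exactly $2^s$ elements. For a proper face $f$ let $\Xi(f)$ be the set of facets containing $f$. If $f\subset\mathbf{F}(k)$ and $f'=\tau_k(f)$, define $\Psi^f_k:\Xi(f)\to\Xi(f')$ by $\Psi^f_k(\mathbf{F}(k))=\mathbf{F}(\omega(k))$ and, for $F'\in\Xi(f)\setminus\{\mathbf{F}(k)\}$, $\Psi^f_k(F')$ is the facet $G$ with $G\cap\mathbf{F}(\omega(k))=\tau_k(F'\cap\mathbf{F}(k))$. $\mathcal{F}$ is strong if for every proper face $f$ and any two valid compositions mapping $f$ onto the same face $\widetilde f$: (a) they agree at every point of $f$; and (b) the corresponding composites of the maps $\Psi$ along the two compositions coincide as maps $\Xi(f)\to\Xi(\widetilde f)$. *)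

(* Defs.v *)
From Stdlib Require Import Reals.
From mathcomp Require Import all_boot.

Set Implicit Arguments.
Unset Strict Implicit.
Unset Printing Implicit Defensive.

Local Open Scope R_scope.

Definition pt (n : nat) := 'I_n -> R.

(* Signed indices [+-n]: (i, true) stands for +(i+1), (i, false) for -(i+1). *)
Definition sidx (n : nat) := ('I_n * bool)%type.
Definition sneg n (j : sidx n) : sidx n := (j.1, ~~ j.2).

Definition qval (b : bool) : R := if b then 1/4 else - (1/4).

Definition in_cube n (x : pt n) : Prop :=
  forall i, - (1/4) <= x i <= 1/4.

Definition facet n (j : sidx n) : pt n -> Prop :=
  fun x => in_cube x /\ x j.1 = qval j.2.

Definition facet2 n (j k : sidx n) : pt n -> Prop :=
  fun x => facet j x /\ facet k x.

(* Faces of the cube, encoded by which coordinates are fixed and to which sign.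
   A code c gives the face {x in C^n | x_i = +-1/4 whenever c i = Some +-}. *)
Definition code (n : nat) := {ffun 'I_n -> option bool}.

Definition face_pts n (c : code n) : pt n -> Prop :=
  fun x => in_cube x /\ forall i b, c i = Some b -> x i = qval b.

Definition proper_face n (c : code n) : Prop := exists i, c i <> None.
Definition codim n (c : code n) : nat := #|[pred i | c i != None]|.
Definition vertex n (c : code n) : Prop := forall i, c i <> None.

Definition subsetP' n (S T : pt n -> Prop) : Prop := forall x, S x -> T x.
Definition seteq n (S T : pt n -> Prop) : Prop := forall x, S x <-> T x.
Definition image n (g : pt n -> pt n) (S : pt n -> Prop) : pt n -> Prop :=
  fun y => exists2 x, S x & g x = y.

Definition dist n (x y : pt n) : R :=
  sqrt (\big[Rplus/R0]_(i < n) ((x i - y i) * (x i - y i))).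

Definition face_preserving n (j : sidx n) (g : pt n -> pt n) : Prop :=
  forall c, subsetP' (face_pts c) (facet j) ->
    exists c', seteq (image g (face_pts c)) (face_pts c').

Definition continuous_on n (S : pt n -> Prop) (g : pt n -> pt n) : Prop :=
  forall x, S x -> forall eps, 0 < eps -> exists2 delta, 0 < delta &
    forall y, S y -> dist x y < delta -> dist (g x) (g y) < eps.

(* Facets-pairing structure (omega, {tau_j}).  tau j is a total function,
   of which only its restriction to F(j) matters. *)
Definition fp_structure n (om : sidx n -> sidx n) (tau : sidx n -> pt n -> pt n)
  : Prop :=
  (forall j, om (om j) = j) /\
  (forall j x, facet j x -> facet (om j) (tau j x)) /\
  (* tau_{omega j} = tau_j^{-1} (with the above, tau_j : F(j) -> F(omega j) is a bijection) *)
  (forall j x, facet j x -> tau (om j) (tau j x) = x) /\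
  (* homeomorphism: continuity (the inverse is tau_{omega j}, also continuous) *)
  (forall j, continuous_on (facet j) (tau j)) /\
  (forall j, face_preserving j (tau j)) /\
  (forall j k k' j', j.1 <> k.1 ->
     seteq (image (tau j) (facet2 j k)) (facet2 (om j) k') ->
     seteq (image (tau k) (facet2 j k)) (facet2 j' (om k)) ->
     forall p, facet2 j k p -> tau k' (tau j p) = tau j' (tau k p)).

Definition regular n (om : sidx n -> sidx n) (tau : sidx n -> pt n -> pt n) : Prop :=
  fp_structure om tau /\
  (forall j x y, facet j x -> facet j y -> dist (tau j x) (tau j y) = dist x y) /\
  (forall j, om (sneg j) = sneg (om j)).

Section Compositions.
Variables (n : nat) (om : sidx n -> sidx n) (tau : sidx n -> pt n -> pt n).

Fixpoint img (ks : seq (sidx n)) (S : pt n -> Prop) : pt n -> Prop :=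
  match ks with
  | [::] => S
  | k :: ks' => img ks' (image (tau k) S)
  end.

Fixpoint comp (ks : seq (sidx n)) (p : pt n) : pt n :=
  match ks with
  | [::] => p
  | k :: ks' => comp ks' (tau k p)
  end.

Fixpoint valid (S : pt n -> Prop) (ks : seq (sidx n)) : Prop :=
  match ks with
  | [::] => True
  | k :: ks' => subsetP' S (facet k) /\ valid (image (tau k) S) ks'
  end.

Definition face_family (f g : code n) : Prop :=
  exists ks, valid (face_pts f) ks /\ seteq (face_pts g) (img ks (face_pts f)).

(* The map Psi^f_k on facets containing f (facets identified with signed indices),
   as a relation: Psi(F(k)) = F(omega k), and for F(j) <> F(k),
   Psi(F(j)) = G with G /\ F(omega k) = tau_k(F(j) /\ F(k)). *)
Definition PsiStep (k j j' : sidx n) : Prop :=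
  (j = k /\ j' = om k) \/
  (j <> k /\ seteq (facet2 j' (om k)) (image (tau k) (facet2 j k))).

Fixpoint PsiComp (ks : seq (sidx n)) (j j'' : sidx n) : Prop :=
  match ks with
  | [::] => j = j''
  | k :: ks' => exists j', PsiStep k j j' /\ PsiComp ks' j' j''
  end.

Definition strong : Prop :=
  forall (f : code n) ks1 ks2, proper_face f ->
    valid (face_pts f) ks1 -> valid (face_pts f) ks2 ->
    seteq (img ks1 (face_pts f)) (img ks2 (face_pts f)) ->
    (forall p, face_pts f p -> comp ks1 p = comp ks2 p) /\
    (forall j, subsetP' (face_pts f) (facet j) ->
       forall j'', PsiComp ks1 j j'' <-> PsiComp ks2 j j'').

Definition has_card (P : code n -> Prop) (m : nat) : Prop :=
  exists l : seq (code n), uniq l /\ size l = m /\ forall g, P g <-> g \in l.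

Definition perfect : Prop :=
  forall f : code n, proper_face f -> has_card (face_family f) (2 ^ codim f)%N.

End Compositions.

(* Main.v *)
Require Import Defs.
From Stdlib Require Import Reals.
From mathcomp Require Import all_boot.
From Stdlib Require Import Lra ClassicalEpsilon FunctionalExtensionality PropExtensionality.
Require Import Defs.

Set Implicit Arguments.
Unset Strict Implicit.
Unset Printing Implicit Defensive.


Section Geo.
Variable n : nat.
Implicit Types (c d : code n) (S T : pt n -> Prop) (j k : sidx n).

Lemma set_ext S T : seteq S T -> S = T.
Proof.
move=> H; apply: functional_extensionality => x.
by apply: propositional_extensionality.
Qed.

Definition cpt c : pt n := fun i => if c i is Some b then qval b else R0.

Lemma qval_bnd b : (Rle (- (1/4)) (qval b) /\ Rle (qval b) (1/4)).
Proof. case: b => /=; lra. Qed.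

Lemma qval_inj b b' : qval b = qval b' -> b = b'.
Proof. by case: b; case: b' => //=; lra. Qed.

Lemma qval_neq0 b : qval b <> R0.
Proof. case: b => /=; lra. Qed.

Lemma cpt_in c : face_pts c (cpt c).
Proof.
split.
  move=> i; rewrite /cpt; case: (c i) => [b|]; first exact: qval_bnd.
  lra.
by move=> i b H; rewrite /cpt H.
Qed.

Definition cle d c := forall i b, d i = Some b -> c i = Some b.

Lemma face_sub c d : subsetP' (face_pts c) (face_pts d) <-> cle d c.
Proof.
split.
  move=> H i b Hd; have [_ H2] := H _ (cpt_in c).
  have := H2 _ _ Hd; rewrite /cpt; case: (c i) => [b'|].
    by move/qval_inj->.
  by move=> /esym /qval_neq0.
move=> H x [Hx1 Hx2]; split => // i b Hd; exact: Hx2 _ _ (H _ _ Hd).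
Qed.

Lemma face_inj c d : face_pts c = face_pts d -> c = d.
Proof.
move=> E.
have H1 : cle d c by apply/face_sub; rewrite E.
have H2 : cle c d by apply/face_sub; rewrite E.
apply/ffunP => i.
case Hc: (c i) => [b|]; first by rewrite (H2 _ _ Hc).
case Hd: (d i) => [b|] //; by rewrite (H1 _ _ Hd) in Hc.
Qed.

Definition fc k : code n := [ffun i => if i == k.1 then Some k.2 else None].
Definition fc2 j k : code n :=
  [ffun i => if i == k.1 then Some k.2 else if i == j.1 then Some j.2 else None].

Lemma facetE k : facet k = face_pts (fc k).
Proof.
apply: set_ext => x; split.
  case=> H1 H2; split => // i b; rewrite ffunE; case: eqP => // -> [<-] //.
case=> H1 H2; split => //; apply: H2; by rewrite ffunE eqxx.
Qed.

Lemma facet2E j k : j.1 != k.1 -> facet2 j k = face_pts (fc2 j k).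
Proof.
move=> Hjk; apply: set_ext => x; split.
  case=> [[H1 H2] [_ H3]]; split => // i b; rewrite ffunE.
  case: eqP => [->|_]; first by case=> <-.
  by case: eqP => // -> [<-].
case=> H1 H2; split; split => //; apply: H2; rewrite ffunE.
  by rewrite (negbTE Hjk) eqxx.
by rewrite eqxx.
Qed.

Lemma sub_facet c k : subsetP' (face_pts c) (facet k) <-> c k.1 = Some k.2.
Proof.
rewrite facetE face_sub; split.
  by move=> H; apply: H; rewrite ffunE eqxx.
move=> H i b; rewrite ffunE; case: eqP => // -> [<-] //.
Qed.

End Geo.

Section Vert.
Variable n : nat.
Implicit Types (c d : code n).

Lemma vertex_pts c : vertex c -> face_pts c = (fun x => x = cpt c).
Proof.
move=> Hv; apply: set_ext => x; split; last by move=> ->; exact: cpt_in.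
case=> _ H; apply: functional_extensionality => i; rewrite /cpt.
by case E: (c i) => [b|]; [exact: H | case: (Hv i)].
Qed.

Definition upd (x : pt n) (i : 'I_n) (r : R) : pt n := fun i' => if i' == i then r else x i'.

Lemma single_vertex c p : face_pts c = (fun x => x = p) -> vertex c.
Proof.
move=> E i Ci.
have H1 : face_pts c (cpt c) by exact: cpt_in.
have H2 : face_pts c (upd (cpt c) i (1/4)).
  split.
    move=> i'; rewrite /upd; case: eqP => _; first by have := qval_bnd true.
    by have [H _] := cpt_in c; apply: H.
  move=> i' b Hb; rewrite /upd; case: eqP => [E'|_]; first by rewrite E' Ci in Hb.
  by rewrite /cpt Hb.
rewrite E in H1 H2.
have : upd (cpt c) i (1/4) i = cpt c i by rewrite H2 H1.
rewrite /upd eqxx /cpt Ci; lra.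
Qed.

Definition Vset : {set code n} := [set c : code n | [forall i, c i != None]].

Lemma VsetP c : vertex c <-> c \in Vset.
Proof.
rewrite inE; split; first by move=> H; apply/forallP => i; apply/eqP; apply: H.
by move/forallP => H i; apply/eqP.
Qed.

Lemma card_Vset : #|Vset| = 2 ^ n.
Proof.
pose h (b : {ffun 'I_n -> bool}) : code n := [ffun i => Some (b i)].
have hinj : injective h.
  move=> b1 b2 E; apply/ffunP => i.
  by have := congr1 (fun c : code n => c i) E; rewrite /h !ffunE => [[]].
have -> : Vset = h @: setT.
  apply/setP => c; apply/idP/imsetP.
    move/VsetP => Hc; exists [ffun i => odflt true (c i)] => //.
    apply/ffunP => i; rewrite /h !ffunE; by case E: (c i) (Hc i).
  by case=> b _ ->; apply/VsetP => i; rewrite /h ffunE.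
by rewrite card_imset // cardsT card_ffun card_bool card_ord.
Qed.

Lemma codim_vertex c : vertex c -> codim c = n.
Proof.
move=> Hv; rewrite /codim -[RHS]card_ord; apply: eq_card => i.
by rewrite !inE; apply/eqP; apply: Hv.
Qed.

End Vert.


Section Pair.
Variable n : nat.
Variables (om : sidx n -> sidx n) (tau : sidx n -> pt n -> pt n).
Hypothesis Hinv : forall j, om (om j) = j.
Hypothesis Hmap : forall j x, facet j x -> facet (om j) (tau j x).
Hypothesis Hback : forall j x, facet j x -> tau (om j) (tau j x) = x.
Hypothesis Hfp : forall j, face_preserving j (tau j).
Hypothesis Hcyc : forall j k k' j', j.1 <> k.1 ->
     seteq (image (tau j) (facet2 j k)) (facet2 (om j) k') ->
     seteq (image (tau k) (facet2 j k)) (facet2 j' (om k)) ->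
     forall p, facet2 j k p -> tau k' (tau j p) = tau j' (tau k p).

Implicit Types (c d : code n) (S T : pt n -> Prop) (j k : sidx n).

Lemma image_sub k S T : subsetP' S T -> subsetP' (image (tau k) S) (image (tau k) T).
Proof. by move=> H y [x Hx <-]; exists x => //; apply: H. Qed.

Lemma image_facet k S : subsetP' S (facet k) -> subsetP' (image (tau k) S) (facet (om k)).
Proof. by move=> H y [x Hx <-]; apply: Hmap; apply: H. Qed.

Lemma image_inv k S : subsetP' S (facet k) -> image (tau (om k)) (image (tau k) S) = S.
Proof.
move=> H; apply: set_ext => x; split.
  by case=> y [z Hz <-] <-; rewrite Hback //; apply: H.
by move=> Hx; exists (tau k x); [exists x | rewrite Hback //; apply: H].
Qed.

Lemma image_inv' k S : subsetP' S (facet (om k)) -> image (tau k) (image (tau (om k)) S) = S.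
Proof. by move=> H; have := image_inv H; rewrite Hinv. Qed.

Lemma face_img c k : c k.1 = Some k.2 -> exists c', image (tau k) (face_pts c) = face_pts c'.
Proof.
move=> H; have [c' Hc'] := Hfp (proj2 (sub_facet c k) H).
by exists c'; apply: set_ext.
Qed.

Definition nonempty S := exists x, S x.

Lemma facet_neq k j : k.1 != j.1 -> ~ subsetP' (facet k) (facet j).
Proof.
move=> Hkj; rewrite !facetE => /face_sub H.
have := H j.1 j.2; rewrite !ffunE eqxx => /(_ erefl).
by rewrite eq_sym (negbTE Hkj).
Qed.


Lemma fc2_sub (a m : sidx n) : a.1 != m.1 -> subsetP' (face_pts (fc2 a m)) (facet a).
Proof. by move=> H; rewrite -facet2E // => x []. Qed.

Lemma fc2_sub' (a m : sidx n) : a.1 != m.1 -> subsetP' (face_pts (fc2 a m)) (facet m).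
Proof. by move=> H; rewrite -facet2E // => x []. Qed.

Lemma step_codim2 j k : j.1 != k.1 ->
  exists a, a.1 != (om k).1 /\ image (tau k) (facet2 j k) = facet2 a (om k).
Proof.
move=> Hjk; rewrite (facet2E Hjk).
have Hk : fc2 j k k.1 = Some k.2 by rewrite ffunE eqxx.
have [c' Hc'] := face_img Hk.
have Hc'k : c' (om k).1 = Some (om k).2.
  apply/sub_facet; rewrite -Hc'; apply: image_facet; exact: fc2_sub'.
have Hsubk : subsetP' (face_pts (fc2 j k)) (facet k) by exact: fc2_sub'.
have Einv : face_pts (fc2 j k) = image (tau (om k)) (face_pts c').
  by rewrite -Hc' image_inv.
have [i [b [Hi Hib]]] : exists i b, i != (om k).1 /\ c' i = Some b.
  apply: NNPP => Hn.
  have Ec : c' = fc (om k).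
    apply/ffunP => i; rewrite ffunE; case: eqP => [->//|/eqP Hi].
    case E: (c' i) => [b|] //; case: Hn; by exists i, b.
  rewrite Ec -facetE in Einv.
  apply: (facet_neq (k:=k) (j:=j)); first by rewrite eq_sym.
  move=> x Hx; apply: (fc2_sub (m:=k)) => //; rewrite Einv.
  rewrite -(@image_inv k (facet k) (fun x h => h)) in Hx.
  by move: x Hx; apply: image_sub; apply: image_facet.
set a := (i, b).
have Ha : a.1 != (om k).1 by [].
exists a; split => //; rewrite (facet2E Ha).
have Hsc' : subsetP' (face_pts c') (face_pts (fc2 a (om k))).
  apply/face_sub => i' b'; rewrite ffunE; case: eqP => [->[<-]//|_].
  by case: eqP => // -> [<-].
have Hom : fc2 a (om k) (om k).1 = Some (om k).2 by rewrite ffunE eqxx.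
have [d Hd] := face_img Hom.
have Hdk : subsetP' (face_pts d) (facet k).
  by rewrite -Hd; have := @image_facet (om k) _ (fc2_sub' Ha); rewrite Hinv.
have Hjd : cle d (fc2 j k).
  apply/face_sub; rewrite Einv -Hd; exact: image_sub.
have Hdk1 : d k.1 = Some k.2 by apply/sub_facet.
case Edj: (d j.1) => [b'|].
  have Ed : d = fc2 j k.
    apply/ffunP => i'; rewrite ffunE; case: eqP => [->//|/eqP Hik].
    case: eqP => [->|/eqP Hij].
      by rewrite Edj; have := Hjd _ _ Edj; rewrite ffunE (negbTE Hjk) eqxx.
    case E: (d i') => [b''|] //; have := Hjd _ _ E.
    by rewrite ffunE (negbTE Hik) (negbTE Hij).
  by rewrite -Ed -Hd image_inv' //; apply: fc2_sub'.
have Ed : d = fc k.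
  apply/ffunP => i'; rewrite ffunE; case: eqP => [->//|/eqP Hik].
  case E: (d i') => [b''|] //; have := Hjd _ _ E.
  rewrite ffunE (negbTE Hik); case: eqP => [Eij|//].
  by rewrite Eij Edj in E.
exfalso; apply: (facet_neq (k:=om k) (j:=a)); first by rewrite eq_sym.
move=> x Hx; apply: (fc2_sub Ha).
have -> : face_pts (fc2 a (om k)) = image (tau k) (face_pts d).
  by rewrite -Hd image_inv' //; apply: fc2_sub'.
rewrite Ed -facetE.
rewrite -(@image_inv' k (facet (om k)) (fun x h => h)) in Hx.
move: x Hx; apply: image_sub; have := @image_facet (om k) _ (fun x h => h); rewrite Hinv; apply.
Qed.


Definition psi k j : sidx n :=
  if j == k then om k else
  epsilon (inhabits j) (fun a => seteq (facet2 a (om k)) (image (tau k) (facet2 j k))).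

Lemma facet2_inj (a a' m : sidx n) : a.1 != m.1 -> seteq (facet2 a' m) (facet2 a m) -> a' = a.
Proof.
move=> Ham E.
have Hx : facet2 a m (cpt (fc2 a m)) by rewrite facet2E //; exact: cpt_in.
have [[_ H1] [_ H2]] := proj2 (E _) Hx.
move: H1; rewrite /cpt ffunE.
case: eqP => [E1|_].
  move/qval_inj => E2.
  have Ea' : a' = m.
    by move: E1 E2; case: (a') => /= ? ? -> <-; case: (m).
  have Hy : facet2 a' m (cpt (fc m)).
    rewrite Ea'; have := cpt_in (fc m); rewrite -facetE => H; by split.
  have [[_ Hy1] _] := proj1 (E _) Hy.
  by move: Hy1; rewrite /cpt ffunE (negbTE Ham) => /esym /qval_neq0.
case: eqP => [E1|_].
  move/qval_inj => E2; move: E1 E2; case: (a') => /= ? ? -> <-; by case: (a).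
by move=> /esym /qval_neq0.
Qed.

Lemma psi_spec j k : j.1 != k.1 ->
  (psi k j).1 != (om k).1 /\ image (tau k) (facet2 j k) = facet2 (psi k j) (om k).
Proof.
move=> Hjk.
have Hne : (j == k) = false by apply/negbTE; apply: contra Hjk => /eqP ->.
have [a [Ha Ea]] := step_codim2 Hjk.
have Hex : exists a, seteq (facet2 a (om k)) (image (tau k) (facet2 j k)).
  by exists a; rewrite Ea.
have := epsilon_spec (inhabits j) _ Hex; rewrite /psi Hne => Hs.
have E2 : epsilon (inhabits j) (fun a => seteq (facet2 a (om k)) (image (tau k) (facet2 j k))) = a.
  by apply: facet2_inj Ha _; rewrite -Ea.
by rewrite E2.
Qed.

Lemma psi_kk k : psi k k = om k.
Proof. by rewrite /psi eqxx. Qed.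

Lemma PsiStep_psi k j j' : j = k \/ j.1 != k.1 -> PsiStep om tau k j j' <-> j' = psi k j.
Proof.
case=> [->|Hjk].
  rewrite psi_kk /PsiStep; split; first by case=> [[_ ->]|[]].
  by move=> ->; left.
have Hne : j <> k by move=> E; rewrite E eqxx in Hjk.
have [H1 H2] := psi_spec Hjk.
rewrite /PsiStep; split.
  case=> [[]//|[_ E]]; apply: facet2_inj H1 _; by rewrite -H2.
by move=> ->; right; split => //; rewrite H2.
Qed.

Lemma neq1 S j k : nonempty S -> subsetP' S (facet j) -> subsetP' S (facet k) ->
  j = k \/ j.1 != k.1.
Proof.
move=> [x Hx] Hj Hk; case: (eqVneq j.1 k.1) => [E|]; last by right.
left; have [_ E1] := Hj _ Hx; have [_ E2] := Hk _ Hx.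
rewrite E E2 in E1; move/qval_inj: E1 => E3.
by move: E E3; case: (j) => /= ? ? -> <-; case: (k).
Qed.

Lemma psi_sub S j k : nonempty S -> subsetP' S (facet j) -> subsetP' S (facet k) ->
  subsetP' (image (tau k) S) (facet (psi k j)).
Proof.
move=> Hn Hj Hk; case: (neq1 Hn Hj Hk) => [->|Hjk].
  by rewrite psi_kk; apply: image_facet.
have [H1 H2] := psi_spec Hjk.
move=> y Hy.
have : facet2 (psi k j) (om k) y.
  rewrite -H2; move: y Hy; apply: image_sub => x Hx; split; [exact: Hj | exact: Hk].
by case.
Qed.

Lemma psi_inv j k : j.1 != k.1 -> psi (om k) (psi k j) = j.
Proof.
move=> Hjk; have [H1 H2] := psi_spec Hjk.
have [H3 H4] := psi_spec H1.
move: H4; rewrite -H2 image_inv; last by move=> x [].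
rewrite Hinv => E; apply: facet2_inj Hjk _; by rewrite E.
Qed.

Lemma psi_inj S k j1 j2 : nonempty S -> subsetP' S (facet k) ->
  subsetP' S (facet j1) -> subsetP' S (facet j2) -> psi k j1 = psi k j2 -> j1 = j2.
Proof.
move=> Hn Hk H1 H2.
case: (neq1 Hn H1 Hk) => [->|E1]; case: (neq1 Hn H2 Hk) => [->//|E2].
- rewrite psi_kk => E; have [F _] := psi_spec E2; by rewrite -E eqxx in F.
- rewrite psi_kk => E; have [F _] := psi_spec E1; by rewrite E eqxx in F.
- move=> E; by rewrite -(psi_inv E1) E psi_inv.
Qed.

Lemma psi_surj S k m : nonempty S -> subsetP' S (facet k) ->
  subsetP' (image (tau k) S) (facet m) -> exists j, subsetP' S (facet j) /\ psi k j = m.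
Proof.
move=> Hn Hk Hm.
have HnT : nonempty (image (tau k) S) by case: Hn => x Hx; exists (tau k x); exists x.
have HT : subsetP' (image (tau k) S) (facet (om k)) by exact: image_facet.
case: (neq1 HnT Hm HT) => [->|E].
  by exists k; split => //; rewrite psi_kk.
exists (psi (om k) m); split.
  rewrite -(image_inv Hk); have := psi_sub HnT Hm HT; by [].
by have := psi_inv E; rewrite Hinv.
Qed.

Definition psis (ks : seq (sidx n)) j := foldl (fun j k => psi k j) j ks.

Lemma img_cat ks1 ks2 S : img tau (ks1 ++ ks2) S = img tau ks2 (img tau ks1 S).
Proof. by elim: ks1 S => //= k ks IH S; rewrite IH. Qed.

Lemma valid_cat ks1 ks2 S : valid tau S (ks1 ++ ks2) <-> valid tau S ks1 /\ valid tau (img tau ks1 S) ks2.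
Proof.
elim: ks1 S => [|k ks IH] S /=; first by split => // [[]].
rewrite IH; split; [by case=> ? []| by case=> [[]]].
Qed.

Lemma valid_rcons ks k S : valid tau S (rcons ks k) <-> valid tau S ks /\ subsetP' (img tau ks S) (facet k).
Proof.
rewrite -cats1 valid_cat /=; split; [by case=> ? [] | by case=> ? ?; split].
Qed.

Lemma img_nonempty ks S : nonempty S -> nonempty (img tau ks S).
Proof.
elim: ks S => //= k ks IH S [x Hx]; apply: IH; by exists (tau k x); exists x.
Qed.

Lemma psis_cat ks1 ks2 j : psis (ks1 ++ ks2) j = psis ks2 (psis ks1 j).
Proof. by rewrite /psis foldl_cat. Qed.

Lemma valid_psis ks S j : valid tau S ks -> nonempty S -> subsetP' S (facet j) ->
  subsetP' (img tau ks S) (facet (psis ks j)).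
Proof.
elim: ks S j => //= k ks IH S j [Hk Hv] Hn Hj.
apply: IH => //; first by case: Hn => x Hx; exists (tau k x); exists x.
exact: psi_sub.
Qed.

Lemma PsiComp_psis ks S j j'' : valid tau S ks -> nonempty S -> subsetP' S (facet j) ->
  (PsiComp om tau ks j j'' <-> j'' = psis ks j).
Proof.
elim: ks S j j'' => [|k ks IH] S j j'' /=; first by move=> _ _ _; split => ->.
case=> Hk Hv Hn Hj.
have HnT : nonempty (image (tau k) S) by case: Hn => x Hx; exists (tau k x); exists x.
have Hd := neq1 Hn Hj Hk.
split.
  case=> j' [/(PsiStep_psi _ Hd) -> H]; exact: (proj1 (IH _ _ _ Hv HnT (psi_sub Hn Hj Hk)) H).
move=> ->; exists (psi k j); split; first by apply/PsiStep_psi.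
exact: (proj2 (IH _ _ _ Hv HnT (psi_sub Hn Hj Hk)) erefl).
Qed.

Lemma psis_inj ks S j1 j2 : valid tau S ks -> nonempty S -> subsetP' S (facet j1) ->
  subsetP' S (facet j2) -> psis ks j1 = psis ks j2 -> j1 = j2.
Proof.
elim: ks S j1 j2 => //= k ks IH S j1 j2 [Hk Hv] Hn H1 H2 E.
have HnT : nonempty (image (tau k) S) by case: Hn => x Hx; exists (tau k x); exists x.
apply: (psi_inj Hn Hk H1 H2).
by apply: (IH _ _ _ Hv HnT) E; apply: psi_sub.
Qed.

Lemma psis_surj ks S m : valid tau S ks -> nonempty S ->
  subsetP' (img tau ks S) (facet m) -> exists j, subsetP' S (facet j) /\ psis ks j = m.
Proof.
elim: ks S m => /= [|k ks IH] S m; first by move=> _ _ H; exists m.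
case=> Hk Hv Hn Hm.
have HnT : nonempty (image (tau k) S) by case: Hn => x Hx; exists (tau k x); exists x.
have [j' [Hj' E]] := IH _ _ Hv HnT Hm.
have [j [Hj E']] := psi_surj Hn Hk Hj'.
by exists j; split => //; rewrite E' E.
Qed.

End Pair.


Section Base.
Variable n : nat.
Variables (om : sidx n -> sidx n) (tau : sidx n -> pt n -> pt n).
Hypothesis Hinv : forall j, om (om j) = j.
Hypothesis Hmap : forall j x, facet j x -> facet (om j) (tau j x).
Hypothesis Hback : forall j x, facet j x -> tau (om j) (tau j x) = x.
Hypothesis Hfp : forall j, face_preserving j (tau j).
Hypothesis Hcyc : forall j k k' j', j.1 <> k.1 ->
     seteq (image (tau j) (facet2 j k)) (facet2 (om j) k') ->
     seteq (image (tau k) (facet2 j k)) (facet2 j' (om k)) ->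
     forall p, facet2 j k p -> tau k' (tau j p) = tau j' (tau k p).
Hypothesis Hstrong : strong om tau.

Implicit Types (c d : code n) (S T : pt n -> Prop) (j k : sidx n).

Notation psi := (psi om tau).
Notation psis := (psis om tau).

Definition Fr ks l := rcons ks (psis ks l).
Definition real (w : seq (sidx n)) := foldl Fr [::] w.
Definition extf (P : sidx n -> sidx n) e (t : seq (sidx n)) :=
  foldl (fun e l => rcons e (psis e (P l))) e t.

Lemma real_rcons w l : real (rcons w l) = rcons (real w) (psis (real w) l).
Proof. by rewrite /real -cats1 foldl_cat. Qed.

Lemma real_cat w t : real (w ++ t) = real w ++ extf (psis (real w)) [::] t.
Proof.
rewrite /real foldl_cat; set ks0 := foldl Fr [::] w.
rewrite -{1}(cats0 ks0); elim: t [::] => //= l t IH e.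
by rewrite -IH /Fr psis_cat rcons_cat.
Qed.

Lemma extf_eq P Q e t : (forall l, l \in t -> P l = Q l) -> extf P e t = extf Q e t.
Proof.
elim: t e => //= l t IH e H; rewrite H ?mem_head //; apply: IH => l' Hl'.
by apply: H; rewrite in_cons Hl' orbT.
Qed.


Lemma img_single ks p : img tau ks (fun x => x = p) = (fun x => x = comp tau ks p).
Proof.
elim: ks p => //= k ks IH p; rewrite -IH; congr (img _ _ _).
apply: set_ext => y; split; first by case=> x -> <-.
by move=> ->; exists p.
Qed.

Definition revo (ks : seq (sidx n)) := rev (map om ks).

Lemma rev_valid ks S : valid tau S ks ->
  valid tau (img tau ks S) (revo ks) /\ img tau (revo ks) (img tau ks S) = S.
Proof.
elim: ks S => [|k ks IH] S //= [Hk Hv].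
have [H1 H2] := IH _ Hv.
rewrite /revo map_cons rev_cons -/(revo ks); split.
  apply/valid_rcons; split => //; rewrite H2; exact: image_facet.
by rewrite -cats1 img_cat H2 /= (image_inv Hback).
Qed.

Lemma face_img_ks ks c : valid tau (face_pts c) ks -> exists c', img tau ks (face_pts c) = face_pts c'.
Proof.
elim: ks c => [|k ks IH] c /=; first by exists c.
case=> Hk Hv; have [c1 E1] := face_img Hfp (proj1 (sub_facet c k) Hk).
by rewrite E1 in Hv *; apply: IH.
Qed.

Definition code_of (S : pt n -> Prop) : code n :=
  epsilon (inhabits [ffun _ => None]) (fun c => face_pts c = S).

Lemma code_ofP S : (exists c, face_pts c = S) -> face_pts (code_of S) = S.
Proof. by move=> H; apply: (epsilon_spec (inhabits [ffun _ => None]) _ H). Qed.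

Lemma fam_eq f g : face_family tau f g <->
  exists ks, valid tau (face_pts f) ks /\ face_pts g = img tau ks (face_pts f).
Proof.
split; case=> ks [H1 H2]; exists ks; split => //; first exact: set_ext.
by rewrite H2.
Qed.

Lemma fam_sym f g : face_family tau f g -> face_family tau g f.
Proof.
move/fam_eq=> [ks [Hv E]]; apply/fam_eq; exists (revo ks).
have [H1 H2] := rev_valid Hv; by rewrite E.
Qed.

Lemma fam_trans f g h : face_family tau f g -> face_family tau g h -> face_family tau f h.
Proof.
move/fam_eq=> [ks1 [Hv1 E1]] /fam_eq [ks2 [Hv2 E2]]; apply/fam_eq; exists (ks1 ++ ks2).
rewrite valid_cat img_cat -E1; split => //.
Qed.

Variable f : code n.
Hypothesis Hf : proper_face f.

Let S0 := face_pts f.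
Definition L := [set j : sidx n | f j.1 == Some j.2].
Definition Lw (w : seq (sidx n)) := all (fun l => l \in L) w.

Lemma inL j : j \in L <-> subsetP' S0 (facet j).
Proof. by rewrite inE sub_facet; split => /eqP. Qed.

Lemma S0ne : nonempty S0.
Proof. by exists (cpt f); exact: cpt_in. Qed.

Lemma valid_real w : Lw w -> valid tau S0 (real w).
Proof.
elim/last_ind: w => // w l IH; rewrite /Lw all_rcons => /andP [Hl Hw].
rewrite real_rcons; apply/valid_rcons; split; first exact: IH.
apply: valid_psis => //; [exact: IH | exact: S0ne | exact/inL].
Qed.

Definition I w := img tau (real w) S0.

Lemma I_rcons w l : I (rcons w l) = image (tau (psis (real w) l)) (I w).
Proof. by rewrite /I real_rcons -cats1 img_cat. Qed.

Lemma I_ne w : nonempty (I w).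
Proof. apply: img_nonempty; exact: S0ne. Qed.

Lemma I_sub w l : Lw w -> l \in L -> subsetP' (I w) (facet (psis (real w) l)).
Proof. move=> Hw Hl; apply: valid_psis => //; [exact: valid_real | exact: S0ne | exact/inL]. Qed.

Lemma psis_strong ks1 ks2 : valid tau S0 ks1 -> valid tau S0 ks2 ->
  img tau ks1 S0 = img tau ks2 S0 -> forall j, j \in L -> psis ks1 j = psis ks2 j.
Proof.
move=> H1 H2 E j Hj.
have Es : seteq (img tau ks1 S0) (img tau ks2 S0) by rewrite E.
have [_ Hb] := Hstrong Hf H1 H2 Es.
have Hj' := proj1 (inL j) Hj.
have := proj1 (Hb j Hj' (psis ks1 j)).
rewrite (PsiComp_psis Hinv Hmap Hback Hfp _ H1 S0ne Hj').
rewrite (PsiComp_psis Hinv Hmap Hback Hfp _ H2 S0ne Hj').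
by move=> /(_ erefl).
Qed.

Lemma congr_r w1 w2 t : Lw w1 -> Lw w2 -> Lw t -> I w1 = I w2 -> I (w1 ++ t) = I (w2 ++ t).
Proof.
move=> H1 H2 Ht E.
rewrite /I !real_cat !img_cat -/(I w1) -/(I w2) E.
congr (img _ _ _); apply: extf_eq => l Hl.
apply: psis_strong; [exact: valid_real | exact: valid_real | exact: E |].
by move/allP: Ht; apply.
Qed.


Lemma Lw_cat s1 s2 : Lw (s1 ++ s2) = Lw s1 && Lw s2.
Proof. exact: all_cat. Qed.
Lemma Lw_cons a s : Lw (a :: s) = (a \in L) && Lw s.
Proof. by []. Qed.
Lemma Lw_rcons s a : Lw (rcons s a) = (a \in L) && Lw s.
Proof. exact: all_rcons. Qed.

Lemma facet2C j k : facet2 j k = facet2 k j.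
Proof. by apply: set_ext => x; split; case. Qed.

Lemma psis1 ks k j : psis (rcons ks k) j = psi k (psis ks j).
Proof. by rewrite -cats1 psis_cat. Qed.

Lemma swap_end w a b : Lw w -> a \in L -> b \in L ->
  I (rcons (rcons w a) b) = I (rcons (rcons w b) a).
Proof.
move=> Hw Ha Hb; case: (eqVneq a b) => [->//|Hab].
rewrite !I_rcons !real_rcons !psis1.
set ks := real w; set k := psis ks a; set j := psis ks b.
have Hk : subsetP' (I w) (facet k) by exact: I_sub.
have Hj : subsetP' (I w) (facet j) by exact: I_sub.
have Hkj : k <> j.
  move=> E; move/eqP: Hab; apply.
  exact: (psis_inj Hinv Hmap Hback Hfp (valid_real Hw) S0ne (proj1 (inL _) Ha) (proj1 (inL _) Hb) E).
have Hjk : j.1 != k.1 by case: (neq1 (I_ne w) Hj Hk) => // E; case: Hkj.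
have Hkj1 : k.1 != j.1 by rewrite eq_sym.
have [_ E1] := psi_spec Hinv Hmap Hback Hfp Hkj1.
have [_ E2] := psi_spec Hinv Hmap Hback Hfp Hjk.
have Hc := @Hcyc j k (psi j k) (psi k j) (elimN eqP Hjk).
have Hc' : forall p, facet2 j k p -> tau (psi j k) (tau j p) = tau (psi k j) (tau k p).
  apply: Hc; first by rewrite facet2C E1 facet2C.
  by rewrite E2.
have HX : subsetP' (I w) (facet2 j k) by move=> x Hx; split; [exact: Hj | exact: Hk].
apply: set_ext => y; split.
  case=> _ [x Hx <-] <-; exists (tau j x); first by exists x.
  by rewrite Hc' //; apply: HX.
case=> _ [x Hx <-] <-; exists (tau k x); first by exists x.
by rewrite Hc' //; apply: HX.
Qed.

Lemma cancel_end w a : Lw w -> a \in L -> I (rcons (rcons w a) a) = I w.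
Proof.
move=> Hw Ha; rewrite !I_rcons real_rcons psis1 psi_kk (image_inv Hback) //.
exact: I_sub.
Qed.

Lemma swap_mid p a b t : Lw p -> Lw t -> a \in L -> b \in L ->
  I (p ++ a :: b :: t) = I (p ++ b :: a :: t).
Proof.
move=> Hp Ht Ha Hb.
have E : forall x y, p ++ x :: y :: t = rcons (rcons p x) y ++ t.
  by move=> x y; rewrite -!cats1 -!catA.
rewrite !E; apply: congr_r => //; rewrite ?Lw_rcons ?Ha ?Hb ?Hp //.
exact: swap_end.
Qed.

Lemma cancel_mid p a t : Lw p -> Lw t -> a \in L -> I (p ++ a :: a :: t) = I (p ++ t).
Proof.
move=> Hp Ht Ha.
have -> : p ++ a :: a :: t = rcons (rcons p a) a ++ t by rewrite -!cats1 -!catA.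
apply: congr_r => //; rewrite ?Lw_rcons ?Ha ?Hp //.
exact: cancel_end.
Qed.

Lemma bubble p a v t : Lw p -> a \in L -> Lw v -> Lw t ->
  I (p ++ a :: v ++ t) = I (p ++ v ++ a :: t).
Proof.
elim: v p => [|b v IH] p Hp Ha; first by [].
rewrite Lw_cons => /andP [Hb Hv] Ht /=.
rewrite swap_mid //; last by rewrite Lw_cat Hv Ht.
by rewrite -[in LHS]cat_rcons -[in RHS]cat_rcons IH // Lw_rcons Hb Hp.
Qed.

Lemma perm_I u v p : perm_eq u v -> Lw u -> Lw p -> I (p ++ u) = I (p ++ v).
Proof.
elim: u v p => [|a u IH] v p.
  by rewrite perm_sym => /perm_nilP ->.
move=> Hperm; rewrite Lw_cons => /andP [Ha Hu] Hp.
have Hav : a \in v by rewrite -(perm_mem Hperm) mem_head.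
move: Hperm; case/splitPr: Hav => v1 v2 Hperm.
have Hp' : perm_eq u (v1 ++ v2).
  rewrite -(perm_cons a); apply: perm_trans Hperm _.
  by rewrite -cat1s perm_catCA.
have Hv12 : Lw (v1 ++ v2) by rewrite /Lw -(perm_all _ Hp').
move: Hv12; rewrite Lw_cat => /andP [Hv1 Hv2].
rewrite -[in LHS]cat_rcons (IH _ _ Hp') //; last by rewrite Lw_rcons Ha Hp.
by rewrite cat_rcons bubble.
Qed.

Lemma dd p (ds : seq (sidx n)) : Lw p -> Lw ds -> I (p ++ ds ++ ds) = I p.
Proof.
elim: ds p => [|a ds IH] p Hp; first by move=> _ /=; rewrite cats0.
rewrite Lw_cons => /andP [Ha Hds].
have -> : I (p ++ (a :: ds) ++ a :: ds) = I (p ++ [:: a, a & ds ++ ds]).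
  apply: perm_I; [by rewrite /= perm_cons -cat1s perm_catCA | | exact: Hp].
  by rewrite Lw_cat !Lw_cons Hds Ha.
by rewrite cancel_mid ?IH // Lw_cat Hds.
Qed.

Definition canon w := [seq l <- enum L | odd (count_mem l w)].

Lemma canon_uniq w : uniq (canon w).
Proof. by apply: filter_uniq; exact: enum_uniq. Qed.

Lemma mem_canon w l : (l \in canon w) = (l \in L) && odd (count_mem l w).
Proof. by rewrite mem_filter mem_enum andbC. Qed.

Lemma Lw_canon w : Lw (canon w).
Proof. by apply/allP => l; rewrite mem_canon => /andP []. Qed.

Lemma I_canon w : Lw w -> I w = I (canon w).
Proof.
elim/last_ind: w => [|w a IH].
  move=> _; congr I; rewrite /canon; under eq_filter do rewrite /=.
  by rewrite filter_pred0.
rewrite Lw_rcons => /andP [Ha Hw].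
rewrite -!cats1 (@congr_r w (canon w)) ?Lw_canon // ?IH //; last by rewrite /Lw /= Ha.
have Hc := canon_uniq w.
have Ecnt : forall l, count_mem l (w ++ [:: a]) = count_mem l w + (a == l).
  by move=> l; rewrite count_cat /= addn0.
case Hac: (a \in canon w).
  have Hodd : odd (count_mem a w) by move: Hac; rewrite mem_canon => /andP [].
  rewrite -(cat0s (canon w ++ _)) (@perm_I _ [:: a, a & rem a (canon w)]); first last.
  - by [].
  - by rewrite Lw_cat Lw_canon /Lw /= Ha.
  - rewrite cats1 perm_rcons perm_cons; exact: perm_to_rem.
  rewrite (cancel_mid (p := [::])) //; last by apply/allP => l /mem_rem; apply/allP/Lw_canon.
  rewrite -(cat0s (canon _)); apply: perm_I => //; last by apply/allP => l /mem_rem; apply/allP/Lw_canon.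
  apply: uniq_perm; [exact: rem_uniq | exact: canon_uniq |] => l.
  rewrite (mem_rem_uniq _ Hc) inE !mem_canon Ecnt.
  case: (eqVneq l a) => [El|Hla]; first by rewrite El /= oddD Hodd andbF.
  by rewrite /= addn0.
rewrite -(cat0s (canon w ++ _)) -[in RHS](cat0s (canon _)); apply: perm_I => //; last first.
  by rewrite Lw_cat Lw_canon /Lw /= Ha.
apply: uniq_perm; [by rewrite cats1 rcons_uniq Hac Hc | exact: canon_uniq |] => l.
rewrite mem_cat inE !mem_canon Ecnt.
case: (eqVneq l a) => [El|Hla]; last by rewrite orbF addn0.
rewrite El orbT Ha /= oddD; move: Hac; rewrite mem_canon Ha /= => ->; by [].
Qed.


Definition word_of (A : {set sidx n}) := [seq l <- enum L | l \in A].
Definition parset (w : seq (sidx n)) : {set sidx n} := [set l | odd (count_mem l w)].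

Lemma canon_word w : canon w = word_of (parset w).
Proof. by apply: eq_filter => l; rewrite inE. Qed.

Lemma Lw_word A : Lw (word_of A).
Proof. by apply/allP => l; rewrite mem_filter mem_enum => /andP []. Qed.

Lemma word_uniq A : uniq (word_of A).
Proof. by apply: filter_uniq; exact: enum_uniq. Qed.

Lemma mem_word A l : (l \in word_of A) = (l \in A) && (l \in L).
Proof. by rewrite mem_filter mem_enum. Qed.

Lemma parset_sub w : Lw w -> parset w \subset L.
Proof.
move=> Hw; apply/subsetP => l; rewrite inE => Ho.
have : l \in w by rewrite -has_pred1 has_count; case: (count _ _) Ho.
by move/allP: Hw; apply.
Qed.

Lemma repr ks : valid tau S0 ks -> exists w, Lw w /\ ks = real w.
Proof.
elim/last_ind: ks => [|ks k IH]; first by exists [::].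
move/valid_rcons=> [Hv Hk]; have [w [Hw E]] := IH Hv.
rewrite E in Hk; have [j [Hj Ej]] := psis_surj Hinv Hmap Hback Hfp (valid_real Hw) S0ne Hk.
exists (rcons w j); split; first by rewrite Lw_rcons Hw andbT; apply/inL.
by rewrite real_rcons Ej E.
Qed.

Lemma fam_I g : face_family tau f g <-> exists w, Lw w /\ face_pts g = I w.
Proof.
rewrite fam_eq; split.
  case=> ks [Hv E]; have [w [Hw Ew]] := repr Hv; exists w; split => //; by rewrite E Ew.
case=> w [Hw E]; exists (real w); split => //; exact: valid_real.
Qed.

Definition G A := code_of (I (word_of A)).

Lemma G_pts A : face_pts (G A) = I (word_of A).
Proof.
apply: code_ofP; have [c E] := face_img_ks (valid_real (Lw_word A)).
by exists c; rewrite -E.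
Qed.

Lemma I_nil : I [::] = S0.
Proof. by []. Qed.

Lemma word0 : word_of set0 = [::].
Proof. by rewrite /word_of; under eq_filter do rewrite inE; rewrite filter_pred0. Qed.

Lemma fam_G g : face_family tau f g <-> exists2 A : {set sidx n}, A \subset L & g = G A.
Proof.
rewrite fam_I; split.
  case=> w [Hw E]; exists (parset w); first exact: parset_sub.
  by apply: face_inj; rewrite G_pts -canon_word -I_canon.
case=> A HA ->; exists (word_of A); split; [exact: Lw_word | exact: G_pts].
Qed.

Lemma cardL : #|L| = codim f.
Proof.
rewrite /codim -(@card_in_imset _ _ fst L).
  apply: eq_card => i; apply/imsetP/idP.
    by case=> j; rewrite inE => /eqP E ->; rewrite inE E.
  rewrite inE; case E: (f i) => [b|] // _; exists (i, b) => //; by rewrite inE E.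
move=> [i b] [i' b']; rewrite !inE /= => /eqP E1 /eqP E2 Ei.
by rewrite Ei E2 in E1; case: E1 => ->; rewrite Ei.
Qed.

Lemma count_word A l : count_mem l (word_of A) = (l \in A) && (l \in L).
Proof. by rewrite count_uniq_mem ?word_uniq ?mem_word. Qed.

Section Free.
Hypothesis Hfree : forall C : {set sidx n}, C \subset L -> I (word_of C) = S0 -> C = set0.

Lemma G_inj (A B : {set sidx n}) : A \subset L -> B \subset L -> G A = G B -> A = B.
Proof.
move=> HA HB /(congr1 (@face_pts n)); rewrite !G_pts => E.
have E1 : I (word_of A ++ word_of B) = S0.
  rewrite (congr_r _ _ _ E) ?Lw_word //.
  by rewrite -(cat0s (word_of B ++ _)) dd ?Lw_word.
have HwAB : Lw (word_of A ++ word_of B) by rewrite Lw_cat !Lw_word.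
rewrite I_canon // canon_word in E1.
have := Hfree (parset_sub HwAB) E1 => Hp.
apply/setP => l.
case HlL: (l \in L); last first.
  by apply/idP/idP => H; [move/subsetP: HA => /(_ _ H); rewrite HlL | move/subsetP: HB => /(_ _ H); rewrite HlL].
have : l \notin parset (word_of A ++ word_of B) by rewrite Hp inE.
rewrite inE count_cat !count_word HlL !andbT.
by case: (l \in A); case: (l \in B).
Qed.

Lemma perfect_at : has_card (face_family tau f) (2 ^ codim f).
Proof.
exists [seq G A | A <- enum (powerset L)]; split; [|split].
- rewrite map_inj_in_uniq ?enum_uniq // => A B; rewrite !mem_enum !powersetE.
  exact: G_inj.
- by rewrite size_map -cardE card_powerset cardL.
- move=> g; rewrite fam_G; split.
    case=> A HA ->; apply: map_f; by rewrite mem_enum powersetE.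
  case/mapP => A; rewrite mem_enum powersetE => HA ->; by exists A.
Qed.

End Free.


Section Vertex.
Hypothesis Hvf : vertex f.
Hypothesis Hall : forall v, vertex v -> face_family tau f v.

Lemma G_vertex A : vertex (G A).
Proof.
apply: (@single_vertex _ _ (comp tau (real (word_of A)) (cpt f))).
by rewrite G_pts /I /S0 (vertex_pts Hvf) img_single.
Qed.

Lemma G_inj_vertex : {in powerset L &, injective G}.
Proof.
apply/imset_injP.
have -> : G @: powerset L = Vset n.
  apply/setP => c; apply/imsetP/idP.
    by case=> A _ ->; apply/VsetP; exact: G_vertex.
  move/VsetP/Hall/fam_G => [A HA ->]; exists A => //; by rewrite powersetE.
by rewrite card_Vset card_powerset cardL codim_vertex.
Qed.

Lemma vertex_free (C : {set sidx n}) : C \subset L -> I (word_of C) = S0 -> C = set0.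
Proof.
move=> HC E; apply: G_inj_vertex; rewrite ?powersetE ?sub0set //.
by apply: face_inj; rewrite !G_pts E word0.
Qed.

End Vertex.

End Base.

Unset Implicit Arguments.

Theorem mainTheorem7 (n : nat) (hn : 1 <= n)
  (om : sidx n -> sidx n) (tau : sidx n -> pt n -> pt n) :
  regular om tau -> strong om tau ->
  (perfect tau <->
   exists f : code n, proper_face f /\
     forall v : code n, vertex v -> face_family tau f v).
Proof.
move=> [[Hinv [Hmap [Hback [_ [Hfp Hcyc]]]]] _] Hstrong.
have i0 : 'I_n := Ordinal hn.
split.
  move=> Hp.
  pose v0 : code n := [ffun _ => Some true].
  have Hv0 : vertex v0 by move=> i; rewrite ffunE.
  have Hpr : proper_face v0 by exists i0; rewrite ffunE.
  exists v0; split => // v Hv.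
  have [l [Hu [Hs Hm]]] := Hp v0 Hpr.
  rewrite codim_vertex // in Hs.
  have Hlv : forall g, g \in l -> g \in Vset n.
    move=> g /Hm /fam_eq [ks [_ E]]; apply/VsetP.
    apply: (@single_vertex _ _ (comp tau ks (cpt v0))).
    by rewrite E (vertex_pts Hv0) img_single.
  have Hsub : [set g in l] \subset Vset n by apply/subsetP => g; rewrite inE; exact: Hlv.
  have Ecard : #|Vset n| <= #|[set g in l]|.
    have Hc : #|l| = size l by apply/card_uniqP.
    by rewrite card_Vset cardsE Hc Hs.
  have := eqEcard [set g in l] (Vset n); rewrite Hsub Ecard => /eqP El.
  apply/Hm; have : v \in Vset n by apply/VsetP.
  by rewrite -El inE.
case=> f0 [Hf0 Hall0] f Hf.
apply: (perfect_at Hinv Hmap Hback Hfp Hcyc Hstrong Hf) => C HC E.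
pose u : code n := [ffun i => if f i is Some b then Some b else Some true].
have Hu : vertex u by move=> i; rewrite ffunE; case: (f i).
have Hfu : cle f u by move=> i b Hb; rewrite ffunE Hb.
have Hpu : proper_face u by exists i0; apply: Hu.
have Hallu : forall v, vertex v -> face_family tau u v.
  move=> v Hv; apply: fam_trans (fam_sym Hmap Hback (Hall0 u Hu)) (Hall0 v Hv).
have HLfu : forall l, l \in L f -> l \in L u.
  by move=> l; rewrite !inE => /eqP /Hfu ->.
apply: (vertex_free Hinv Hmap Hback Hfp Hcyc Hstrong Hpu Hu Hallu (C:=C)).
  apply/subsetP => l /(subsetP HC); exact: HLfu.
set x := word_of f C.
have Hvx : valid tau (face_pts f) (real om tau x).
  apply: (valid_real Hinv Hmap Hback Hfp); exact: Lw_word.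
have E' : img tau (real om tau x) (face_pts f) = face_pts f := E.
have Es : seteq (img tau (real om tau x) (face_pts f)) (img tau [::] (face_pts f)).
  by rewrite E'.
have [Ha _] := Hstrong f (real om tau x) [::] Hf Hvx Logic.I Es.
have Hin : face_pts f (cpt u) by apply: (proj2 (face_sub u f) Hfu); exact: cpt_in.
have Ex : I om tau u x = face_pts u.
  rewrite /I (vertex_pts Hu) img_single (Ha _ Hin) //.
rewrite -Ex -(cat0s (word_of u C)) -(cat0s x).
apply: (perm_I Hinv Hmap Hback Hfp Hcyc Hstrong Hpu); last by [].
  apply: uniq_perm; [exact: word_uniq | exact: word_uniq |] => l.
  rewrite !mem_word; case HlC: (l \in C) => //=.
  have := subsetP HC _ HlC; rewrite /x => HlL; by rewrite HlL HLfu.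
exact: Lw_word.
Qed.
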